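(* Let $\mathfrak g$ be a Lie algebra with a Cartan subalgebra $\mathfrak h$ and a root decomposition with roots $\Delta$. Any parabolic decomposition $\Delta=\Delta^-\sqcup\Delta^0\sqcup\Delta^+$ is determined by some oriented $\langle\Delta^0\rangle_{\mathbb R}$-maximal chain of vector subspaces in $\langle\Delta\rangle_{\mathbb R}$; conversely, for an arbitrary subspace $V'$ of $\langle\Delta\rangle_{\mathbb R}$, any oriented $V'$-maximal chain in $\langle\Delta\rangle_{\mathbb R}$ defines a unique parabolic decomposition of $\Delta$ with $\Delta^0=\Delta\cap V'$.
   Context: $\langle S\rangle_{\mathbb R}$ denotes real span. For a subspace $V'\subset\langle\Delta\rangle_{\mathbb R}$ (resp. for $\langle\Delta^0\rangle_{\mathbb R}$) let $\Pi$ be the projection $\langle\Delta\rangle_{\mathbb R}\to\langle\Delta\rangle_{\mathbb R}/V'$. A decomposition $\Delta=\Delta^-\sqcup\Delta^0\sqcup\Delta^+$ is parabolic if, with $\Pi:\langle\Delta\rangle_{\mathbb R}\to\langle\Delta\rangle_{\mathbb R}/\langle\Delta^0\rangle_{\mathbb R}$, one has $\Pi(\Delta^-)\cap\Pi(\Delta^+)=\emptyset$, $0\notin\Pi(\Delta^\pm)$, and $\Pi(\Delta)\setminus\{0\}=\Pi(\Delta^-)\sqcup\Pi(\Delta^+)$ is a triangular decomposition, i.e. the cone of nonnegative real combinations of $\Pi(\Delta^+)\cup-\Pi(\Delta^-)$ contains no nonzero vector subspace. A chain of subspaces of a real vector space is a set of subspaces totally ordered by proper inclusion, maximal if not contained in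 a larger chain; a basic chain is a chain minimal with the property that every vector $x$ lies in $G_b\setminus G_a$ for some members $G_a\subset G_b$ with $\dim G_b/G_a=1$; each maximal chain contains a unique basic subchain; an orientation is a labeling by $\pm$ of the two half-spaces of $G_b\setminus G_a$ for each such codimension-one pair of the basic subchain. An (oriented) $V'$-maximal chain in $\langle\Delta\rangle_{\mathbb R}$ is the preimage under $\Pi$ of an (oriented) maximal chain in $\langle\Delta\rangle_{\mathbb R}/V'$. An oriented maximal chain in $\langle\Delta\rangle_{\mathbb R}/V'$ defines an $\mathbb R$-linear order on that quotient ($y>0$ iff $y$ lies in the $+$ half of $G_b\setminus G_a$ for the codimension-one pair with $y\in G_b\setminus G_a$), and the associated decomposition is $\Delta^0=\Delta\cap V'$, $\Delta^\pm=\{\alpha\in\Delta\setminus V':\pm\Pi(\alpha)>0\}$. *)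

(* Defs.v *)
From HB Require Import structures.
From mathcomp Require Import all_boot all_order all_algebra.
From mathcomp Require Import boolp classical_sets reals.
Set Implicit Arguments. Unset Strict Implicit. Unset Printing Implicit Defensive.
Import GRing.Theory Num.Theory.
Local Open Scope ring_scope.
Local Open Scope classical_set_scope.

Section Defs.
Context {R : realType} {E : lmodType R}.

Definition subspace (U : set E) : Prop :=
  U 0 /\ (forall x y, U x -> U y -> U (x + y)) /\ (forall (a : R) x, U x -> U (a *: x)).

Definition rspan (S : set E) : set E :=
  [set x | exists n (c : 'I_n -> R) (v : 'I_n -> E),
            (forall i, S (v i)) /\ x = \sum_(i < n) c i *: v i].

Definition rcone (S : set E) : set E :=
  [set x | exists n (c : 'I_n -> R) (v : 'I_n -> E),
            (forall i, 0 <= c i /\ S (v i)) /\ x = \sum_(i < n) c i *: v i].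

(* Subspaces of W/V' are represented by their preimages: subspaces G with
   V' <= G <= W.  dim (Gb/Ga) = 1 : *)
Definition codim1 (Ga Gb : set E) : Prop :=
  Ga `<=` Gb /\ exists v, Gb v /\ ~ Ga v /\
     (forall y, Gb y -> exists t : R, Ga (y - t *: v)).

Definition rel_subspace (V' W G : set E) : Prop :=
  subspace G /\ V' `<=` G /\ G `<=` W.

Definition chain (V' W : set E) (C : set (set E)) : Prop :=
  (forall G, C G -> rel_subspace V' W G) /\
  (forall G1 G2, C G1 -> C G2 -> G1 `<=` G2 \/ G2 `<=` G1).

Definition maximal_chain (V' W : set E) (C : set (set E)) : Prop :=
  chain V' W C /\ (forall C', chain V' W C' -> C `<=` C' -> C' = C).

Definition covers (V' W : set E) (B : set (set E)) : Prop :=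
  forall x, W x -> ~ V' x ->
    exists Ga Gb, B Ga /\ B Gb /\ Ga `<` Gb /\ codim1 Ga Gb /\ Gb x /\ ~ Ga x.

Definition basic_chain (V' W : set E) (B : set (set E)) : Prop :=
  chain V' W B /\ covers V' W B /\
  (forall B', chain V' W B' -> B' `<` B -> ~ covers V' W B').

(* an orientation picks, for each codim-one pair (Ga, Gb) of B, a vector
   o Ga Gb in Gb \ Ga; the "+" half of Gb \ Ga is the side containing it *)
Definition orientation (B : set (set E)) (o : set E -> set E -> E) : Prop :=
  forall Ga Gb, B Ga -> B Gb -> Ga `<` Gb -> codim1 Ga Gb ->
    Gb (o Ga Gb) /\ ~ Ga (o Ga Gb).

Definition pos_half (Ga Gb : set E) (v : E) : set E :=
  [set y | Gb y /\ ~ Ga y /\ exists t : R, 0 < t /\ Ga (y - t *: v)].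

Definition oriented_chain (V' W : set E) (C B : set (set E))
    (o : set E -> set E -> E) : Prop :=
  maximal_chain V' W C /\ B `<=` C /\ basic_chain V' W B /\ orientation B o.

Definition chain_pos (B : set (set E)) (o : set E -> set E -> E) (y : E) : Prop :=
  exists Ga Gb, B Ga /\ B Gb /\ Ga `<` Gb /\ codim1 Ga Gb /\ Gb y /\ ~ Ga y /\
    pos_half Ga Gb (o Ga Gb) y.

Definition assoc_dec (V' D : set E) (B : set (set E)) (o : set E -> set E -> E)
  : set E * set E * set E :=
  ([set a | D a /\ ~ V' a /\ chain_pos B o (- a)],
   D `&` V',
   [set a | D a /\ ~ V' a /\ chain_pos B o a]).

(* parabolic decomposition; Pi = projection modulo V0 := <Delta^0>_R,
   expressed on representatives (Pi x = Pi y  <->  V0 (x - y)) *)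
Definition parabolic (D Dm D0 Dp : set E) : Prop :=
  let V0 := rspan D0 in
  D = Dm `|` D0 `|` Dp /\ Dm `&` D0 = set0 /\ Dm `&` Dp = set0 /\ D0 `&` Dp = set0 /\
  (forall a b, Dm a -> Dp b -> ~ V0 (a - b)) /\
  (forall a, Dm a \/ Dp a -> ~ V0 a) /\
  (forall x, ((exists a, D a /\ V0 (x - a)) /\ ~ V0 x) <->
             (exists a, (Dm a \/ Dp a) /\ V0 (x - a))) /\
  (* triangular: the cone of nonnegative combinations of Pi(Dp) u -Pi(Dm)
     contains no nonzero subspace of the quotient *)
  (forall U, subspace U -> V0 `<=` U ->
     U `<=` [set x | exists k, rcone (Dp `|` ((fun a => - a) @` Dm)) k /\ V0 (x - k)] ->
     U `<=` V0).

End Defs.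

(* Main.v *)
Require Import Defs.
From HB Require Import structures.
From mathcomp Require Import all_boot all_order all_algebra.
From mathcomp Require Import boolp classical_sets reals.
From mathcomp Require Import lra.
Import Order.TTheory GRing.Theory Num.Theory.
Local Open Scope ring_scope.
Local Open Scope classical_set_scope.
Set Implicit Arguments. Unset Strict Implicit. Unset Printing Implicit Defensive.

Section Gen.
Context {R : realType} {E : lmodType R}.
Implicit Types (U A Bs H S : set E) (x y z v w : E).

Definition combo (Q : R -> E -> Prop) : set E :=
  [set x | exists n (c : 'I_n -> R) (v : 'I_n -> E),
            (forall i, Q (c i) (v i)) /\ x = \sum_(i < n) c i *: v i].

Lemma combo0 Q : combo Q 0.
Proof. exists 0%N, (fun _ => 0), (fun _ => 0); split; first by case.
by rewrite big_ord0. Qed.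

Lemma combo1 (Q : R -> E -> Prop) c v : Q c v -> combo Q (c *: v).
Proof. move=> Qcv; exists 1%N, (fun _ => c), (fun _ => v); split => //.
by rewrite big_ord1. Qed.

Lemma comboD Q x y : combo Q x -> combo Q y -> combo Q (x + y).
Proof.
move=> [n [c [v [Hc ->]]]] [m [d [u [Hd ->]]]].
exists (n + m)%N, (fun i => match split i with inl j => c j | inr j => d j end),
  (fun i => match split i with inl j => v j | inr j => u j end); split.
  by move=> i; case: (split i).
rewrite big_split_ord /=; congr (_ + _); apply: eq_bigr => i _.
  by rewrite -[lshift m i]/(unsplit (inl i)) unsplitK.
by rewrite -[rshift n i]/(unsplit (inr i)) unsplitK.
Qed.

Lemma comboZ (Q : R -> E -> Prop) k x :
  (forall c v, Q c v -> Q (k * c) v) -> combo Q x -> combo Q (k *: x).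
Proof.
move=> HQ [n [c [v [Hc ->]]]]; exists n, (fun i => k * c i), v; split.
  by move=> i; apply: HQ.
by rewrite scaler_sumr; apply: eq_bigr => i _; rewrite scalerA.
Qed.

Lemma subspaceN U x : subspace U -> U x -> U (- x).
Proof. by move=> [_ [_ HZ]] Ux; rewrite -scaleN1r; apply: HZ. Qed.

Lemma subspaceD U x y : subspace U -> U x -> U y -> U (x + y).
Proof. by move=> [_ [HD _]]; apply: HD. Qed.

Lemma subspaceB U x y : subspace U -> U x -> U y -> U (x - y).
Proof. by move=> sU Ux Uy; apply: subspaceD => //; apply: subspaceN. Qed.

Lemma subspaceZ U a x : subspace U -> U x -> U (a *: x).
Proof. by move=> [_ [_ HZ]]; apply: HZ. Qed.

Lemma subspace0 U : subspace U -> U 0.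
Proof. by case. Qed.

Lemma combo_sub (Q : R -> E -> Prop) U :
  subspace U -> (forall c v, Q c v -> U v) -> combo Q `<=` U.
Proof.
move=> sU HQ x [n [c [v [Hc ->]]]].
apply: (big_ind U); first exact: subspace0.
  by move=> a b; apply: subspaceD.
by move=> i _; apply: subspaceZ => //; apply: (HQ (c i)).
Qed.

Lemma rspan_subspace S : subspace (rspan S).
Proof.
split; first exact: (combo0 (fun _ v => S v)).
split; first by move=> x y; apply: (comboD (Q := fun _ v => S v)).
by move=> a x; apply: (comboZ (Q := fun _ v => S v)).
Qed.

Lemma rspan_gen S x : S x -> rspan S x.
Proof. by move=> Sx; rewrite -[x]scale1r; apply: (combo1 (Q := fun _ v => S v)). Qed.

Lemma rspan_min S U : subspace U -> S `<=` U -> rspan S `<=` U.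
Proof. by move=> sU SU; apply: (combo_sub (Q := fun _ v => S v)) => // c v /SU. Qed.

Lemma rcone_sub S U : subspace U -> S `<=` U -> rcone S `<=` U.
Proof. by move=> sU SU; apply: (combo_sub (Q := fun c v => 0 <= c /\ S v)) => // c v [_ /SU]. Qed.

Lemma rcone0 S : rcone S 0.
Proof. exact: (combo0 (fun c v => 0 <= c /\ S v)). Qed.

Lemma rconeD S x y : rcone S x -> rcone S y -> rcone S (x + y).
Proof. exact: (comboD (Q := fun c v => 0 <= c /\ S v)). Qed.

Lemma rconeZ S k x : 0 <= k -> rcone S x -> rcone S (k *: x).
Proof. move=> k0; apply: (comboZ (Q := fun c v => 0 <= c /\ S v)).
by move=> c v [c0 Sv]; split => //; apply: mulr_ge0. Qed.

Lemma rcone_gen S x : S x -> rcone S x.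
Proof. move=> Sx; rewrite -[x]scale1r.
by apply: (combo1 (Q := fun c v => 0 <= c /\ S v)); split. Qed.

Lemma idt1 (x y : E) (t e : R) : e *: x - (y - t *: x) = - (y - (t + e) *: x).
Proof. by rewrite !opprB scalerDl addrA [e *: x + _]addrC. Qed.
Lemma idt2 (x y : E) (t e s : R) : e *: x + (y - t *: x) = (y - s *: x) + (s - t + e) *: x.
Proof. by rewrite !scalerDl scaleNr !addrA subrK [RHS]addrC addrA. Qed.
Lemma idt4 (M s : R) (x y : E) : (M *: x - y) + (y - s *: x) = (M - s) *: x.
Proof. by rewrite addrA subrK scalerBl. Qed.

End Gen.
Section Chains.
Context {R : realType} {E : lmodType R}.
Implicit Types (U A Bs H S : set E) (x y z v w : E).

Lemma codim1_proper A Bs : codim1 A Bs -> ~ Bs `<=` A.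
Proof. by move=> [_ [v [Bv [Av _]]]] /(_ v Bv). Qed.

Lemma codim1_any A Bs w : subspace A -> codim1 A Bs -> Bs w -> ~ A w ->
  forall y, Bs y -> exists t : R, A (y - t *: w).
Proof.
move=> sA [AB [v [Bv [Av Hv]]]] Bw Aw y By.
have [s Hs] := Hv w Bw; have [t Ht] := Hv y By.
have s0 : s != 0.
  by apply/eqP => s0; apply: Aw; move: Hs; rewrite s0 scale0r subr0.
exists (t / s).
have -> : y - (t / s) *: w = (y - t *: v) - (t / s) *: (w - s *: v).
  by rewrite scalerBr scalerA mulfVK // opprB addrA subrK.
by apply: subspaceB => //; apply: subspaceZ.
Qed.

Lemma sandwich A Bs H : subspace A -> subspace H -> codim1 A Bs ->
  A `<=` H -> H `<=` Bs -> H = A \/ H = Bs.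
Proof.
move=> sA sH [AB [v [Bv [Av Hv]]]] AH HB.
have [HA|nHA] := pselect (H `<=` A); first by left; apply/seteqP; split.
right; have [h [Hh Ah]] := nonsubset nHA.
have [s Hs] := Hv h (HB _ Hh).
have s0 : s != 0.
  by apply/eqP => s0; apply: Ah; move: Hs; rewrite s0 scale0r subr0.
have Hvv : H v.
  have -> : v = s^-1 *: (h - (h - s *: v)).
    by rewrite opprB addrC subrK scalerA mulVf // scale1r.
  by apply: subspaceZ => //; apply: subspaceB => //; apply: AH.
apply/seteqP; split => // y By; have [t Ht] := Hv y By.
have -> : y = (y - t *: v) + t *: v by rewrite subrK.
by apply: subspaceD => //; [apply: AH | apply: subspaceZ].
Qed.

Section InChain.
Variable Ch : set (set E).
Hypothesis Chsub : forall G, Ch G -> subspace G.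
Hypothesis Chtot : forall G1 G2, Ch G1 -> Ch G2 -> G1 `<=` G2 \/ G2 `<=` G1.

Lemma pairs_order (A1 B1 A2 B2 : set E) : Ch A1 -> Ch B1 -> Ch A2 -> Ch B2 ->
  codim1 A1 B1 -> codim1 A2 B2 -> A1 `<=` A2 ->
  (A1 = A2 /\ B1 = B2) \/ B1 `<=` A2.
Proof.
move=> cA1 cB1 cA2 cB2 c1 c2 A12.
have [B1A2|A2B1] := Chtot cB1 cA2; first by right.
have [e|e] := sandwich (Chsub cA1) (Chsub cA2) c1 A12 A2B1; last first.
  by right; rewrite e.
left; split => //; subst A2.
have [B12|B21] := Chtot cB1 cB2.
  have [e'|//] := sandwich (Chsub cA1) (Chsub cB1) c2 c1.1 B12.
  by exfalso; apply: (codim1_proper c1); rewrite e'.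
have [e'|e'] := sandwich (Chsub cA1) (Chsub cB2) c1 c2.1 B21.
  by exfalso; apply: (codim1_proper c2); rewrite e'.
by rewrite e'.
Qed.

Lemma pair_unique (A1 B1 A2 B2 : set E) y : Ch A1 -> Ch B1 -> Ch A2 -> Ch B2 ->
  codim1 A1 B1 -> codim1 A2 B2 -> B1 y -> ~ A1 y -> B2 y -> ~ A2 y ->
  A1 = A2 /\ B1 = B2.
Proof.
move=> cA1 cB1 cA2 cB2 c1 c2 B1y A1y B2y A2y.
have [A12|A21] := Chtot cA1 cA2.
  have [//|B1A2] := pairs_order cA1 cB1 cA2 cB2 c1 c2 A12.
  by exfalso; apply: A2y; apply: B1A2.
have [[e1 e2]|B2A1] := pairs_order cA2 cB2 cA1 cB1 c2 c1 A21.
  by split.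
by exfalso; apply: A1y; apply: B2A1.
Qed.

End InChain.
End Chains.
Section Pos.
Context {R : realType} {E : lmodType R}.
Implicit Types (U A Bs H S : set E) (x y z v w : E).

Lemma subspace_unscale A c x : subspace A -> c != 0 -> A (c *: x) -> A x.
Proof. by move=> sA c0 /(subspaceZ c^-1 sA); rewrite scalerA mulVf // scale1r. Qed.

Variables (V' W : set E) (B : set (set E)) (o : set E -> set E -> E).
Hypothesis sV' : subspace V'.
Hypothesis chB : chain V' W B.
Hypothesis covB : covers V' W B.
Hypothesis orB : orientation B o.

Let Bsub G : B G -> subspace G. Proof. by move=> /chB.1 []. Qed.
Let BV G : B G -> V' `<=` G. Proof. by move=> /chB.1 [_ []]. Qed.
Let BW G : B G -> G `<=` W. Proof. by move=> /chB.1 [_ []]. Qed.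
Let Btot := chB.2.

Definition posP A Bs y := B A /\ B Bs /\ A `<` Bs /\ codim1 A Bs /\ Bs y /\ ~ A y /\
  exists t : R, 0 < t /\ A (y - t *: o A Bs).

Lemma posE y : chain_pos B o y <-> exists A Bs, posP A Bs y.
Proof.
split.
  move=> [A [Bs [BA [BB [pr [c1 [By [Ay [_ [_ [t [t0 Ht]]]]]]]]]]]].
  by exists A, Bs; do 6 (split => //); exists t.
move=> [A [Bs [BA [BB [pr [c1 [By [Ay [t [t0 Ht]]]]]]]]]].
by exists A, Bs; do 6 (split => //); split => //; split => //; exists t.
Qed.

Lemma posP_o A Bs y : posP A Bs y -> Bs (o A Bs) /\ ~ A (o A Bs).
Proof. by move=> [BA [BB [pr [c1 _]]]]; apply: orB. Qed.

Lemma pos_notV y : chain_pos B o y -> ~ V' y.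
Proof. by move=> /posE [A [Bs [BA [_ [_ [_ [_ [Ay _]]]]]]]] /(BV BA). Qed.

Lemma pos_W y : chain_pos B o y -> W y.
Proof. by move=> /posE [A [Bs [_ [BB [_ [_ [By _]]]]]]]; apply: BW BB _ By. Qed.

Lemma pos_addV y w : chain_pos B o y -> V' w -> chain_pos B o (y + w).
Proof.
move=> /posE [A [Bs [BA [BB [pr [c1 [By [Ay [t [t0 Ht]]]]]]]]]] Vw.
have Aw : A w := BV BA Vw.
apply/posE; exists A, Bs; do 4 (split => //); split.
  by apply: subspaceD (Bsub BB) By (c1.1 _ Aw).
split.
  by move=> Ayw; apply: Ay; rewrite -[y](addrK w); apply: subspaceB (Bsub BA) Ayw Aw.
exists t; split => //; rewrite addrAC; exact: subspaceD (Bsub BA) Ht Aw.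
Qed.

Lemma pos_scale c y : 0 < c -> chain_pos B o y -> chain_pos B o (c *: y).
Proof.
move=> c0 /posE [A [Bs [BA [BB [pr [c1 [By [Ay [t [t0 Ht]]]]]]]]]].
apply/posE; exists A, Bs; do 4 (split => //); split; first exact: subspaceZ (Bsub BB) By.
split; first by move/(subspace_unscale (Bsub BA) (lt0r_neq0 c0)).
exists (c * t); split; first exact: mulr_gt0.
by rewrite -scalerA -scalerBr; apply: subspaceZ (Bsub BA) Ht.
Qed.

Lemma pos_add_aux A1 B1 A2 B2 y z : posP A1 B1 y -> posP A2 B2 z -> A1 `<=` A2 ->
  chain_pos B o (y + z).
Proof.
move=> p1 p2 A12.
move: (p1) (p2) => [BA1 [BB1 [pr1 [c1 [By [Ay [t [t0 Ht]]]]]]]]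
  [BA2 [BB2 [pr2 [c2 [Bz [Az [s [s0 Hs]]]]]]]].
have [[e1 e2]|B1A2] := pairs_order Bsub Btot BA1 BB1 BA2 BB2 c1 c2 A12.
  subst A2 B2; have [ov1 ov2] := posP_o p1.
  apply/posE; exists A1, B1; do 4 (split => //); split.
    exact: subspaceD (Bsub BB1) By Bz.
  have Hsum : A1 (y + z - (t + s) *: o A1 B1).
    by rewrite scalerDl opprD addrACA; apply: subspaceD (Bsub BA1) Ht Hs.
  split.
    move=> Ayz; apply: ov2; apply: (subspace_unscale (c := t + s)) (Bsub BA1) _ _.
      by rewrite lt0r_neq0 // addr_gt0.
    have -> : (t + s) *: o A1 B1 = (y + z) - (y + z - (t + s) *: o A1 B1).
      by rewrite opprB addrCA subrr addr0.
    exact: subspaceB (Bsub BA1) Ayz Hsum.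
  by exists (t + s); split => //; apply: addr_gt0.
apply/posE; exists A2, B2; do 4 (split => //); split.
  by apply: subspaceD (Bsub BB2) _ Bz; apply: c2.1; apply: B1A2.
split.
  move=> Ayz; apply: Az; rewrite -[z](addKr y).
  by apply: subspaceD (Bsub BA2) _ Ayz; apply: subspaceN (Bsub BA2) _; apply: B1A2.
exists s; split => //; rewrite -addrA; apply: subspaceD (Bsub BA2) _ Hs.
exact: B1A2.
Qed.

Lemma pos_add y z : chain_pos B o y -> chain_pos B o z -> chain_pos B o (y + z).
Proof.
move=> /posE [A1 [B1 p1]] /posE [A2 [B2 p2]].
have [A12|A21] := Btot p1.1 p2.1; first exact: pos_add_aux p1 p2 A12.
by rewrite addrC; exact: pos_add_aux p2 p1 A21.
Qed.

Lemma pos_anti y : chain_pos B o y -> chain_pos B o (- y) -> False.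
Proof.
move=> /posE [A1 [B1 p1]] /posE [A2 [B2 p2]].
move: (p1) (p2) => [BA1 [BB1 [pr1 [c1 [By [Ay [t [t0 Ht]]]]]]]]
  [BA2 [BB2 [pr2 [c2 [Bz [Az [s [s0 Hs]]]]]]]].
have B2y : B2 y by rewrite -[y]opprK; apply: subspaceN (Bsub BB2) Bz.
have A2y : ~ A2 y by move=> /(subspaceN (Bsub BA2)).
have [e1 e2] := pair_unique Bsub Btot BA1 BB1 BA2 BB2 c1 c2 By Ay B2y A2y.
subst A2 B2; have [ov1 ov2] := posP_o p1.
apply: ov2; apply: (subspace_unscale (c := - (t + s))) (Bsub BA1) _ _.
  by rewrite oppr_eq0 lt0r_neq0 // addr_gt0.
have -> : - (t + s) *: o A1 B1 = (y - t *: o A1 B1) + (- y - s *: o A1 B1).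
  by rewrite addrACA addrN add0r scaleNr scalerDl opprD.
exact: subspaceD (Bsub BA1) Ht Hs.
Qed.

Lemma pos_total y : W y -> ~ V' y -> chain_pos B o y \/ chain_pos B o (- y).
Proof.
move=> Wy Vy; have [A [Bs [BA [BB [pr [c1 [By Ay]]]]]]] := covB Wy Vy.
have [ov1 ov2] := orB BA BB pr c1.
have [t Ht] := codim1_any (Bsub BA) c1 ov1 ov2 By.
have [t0|t0|t0] := ltgtP 0 t.
- by left; apply/posE; exists A, Bs; do 6 (split => //); exists t.
- right; apply/posE; exists A, Bs; do 4 (split => //); split.
    exact: subspaceN (Bsub BB) By.
  split; first by move=> /(subspaceN (Bsub BA)); rewrite opprK.
  exists (- t); split; first by rewrite oppr_gt0.
  rewrite scaleNr opprK.
  have -> : - y + t *: o A Bs = - (y - t *: o A Bs) by rewrite opprB addrC.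
  exact: subspaceN (Bsub BA) Ht.
- by exfalso; apply: Ay; move: Ht; rewrite -t0 scale0r subr0.
Qed.

End Pos.
Section Part2.
Context {R : realType} {E : lmodType R}.
Implicit Types (U A Bs H S : set E) (x y z v w : E).

Lemma part2 (D V' : set E) (C B : set (set E)) (o : set E -> set E -> E) :
     subspace V' -> V' `<=` rspan D ->
     oriented_chain V' (rspan D) C B o ->
     parabolic D (assoc_dec V' D B o).1.1 (assoc_dec V' D B o).1.2
                 (assoc_dec V' D B o).2 /\
     (assoc_dec V' D B o).1.2 = D `&` V'.
Proof.
move=> sV VW [_ [_ [[chB [covB _]] orB]]].
split; last by [].
rewrite /assoc_dec /=.
set W := rspan D.
set pos := chain_pos B o.
have DW : D `<=` W by move=> x; apply: rspan_gen.
set Dm := [set a | D a /\ ~ V' a /\ pos (- a)].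
set Dp := [set a | D a /\ ~ V' a /\ pos a].
have V0V : rspan (D `&` V') `<=` V' by apply: rspan_min => // x [].
have sV0 := rspan_subspace (D `&` V').
have pnV := pos_notV (o := o) chB.
have pA := pos_add chB orB.
have pZ := pos_scale (o := o) chB.
have cone_pos : forall k, rcone (Dp `|` (fun a => - a) @` Dm) k -> k = 0 \/ pos k.
  move=> k [n [c [v [Hc ->]]]].
  apply: (big_ind (fun k => k = 0 \/ pos k)); first by left.
    move=> a b [->|pa] [->|pb]; [by left; rewrite addr0|by right; rewrite add0r
      |by right; rewrite addr0|by right; apply: pA].
  move=> i _; have [ci0 Hv] := Hc i.
  have pv : pos (v i).
    by case: Hv => [[_ [_ ?]]|[a [_ [_ pa]] <-]].
  have [c0|c0|c0] := ltgtP 0 (c i).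
  - by right; apply: pZ.
  - by exfalso; move: ci0; rewrite leNgt c0.
  - by left; rewrite -c0 scale0r.
rewrite /parabolic.
have hD : D = Dm `|` D `&` V' `|` Dp.
  apply/seteqP; split => x.
    move=> Dx; have [Vx|nVx] := pselect (V' x); first by left; right.
    have [px|px] := pos_total chB covB orB (DW _ Dx) nVx.
      by right.
    by left; left.
  by move=> [[[Dx _]|[Dx _]]|[Dx _]].
split; first exact: hD.
split; first by apply/seteqP; split => x // [[_ [nV _]] [_ Vx]].
split; first by apply/seteqP; split => x // [[_ [_ p1]] [_ [_ p2]]]; apply: (pos_anti chB orB p2 p1).
split; first by apply/seteqP; split => x // [[_ Vx] [_ [nV _]]].
split.
  move=> a b [_ [_ pa]] [_ [_ pb]] Vab.
  apply: (pnV (b + - a)); first exact: pA.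
  by rewrite -opprB; apply: subspaceN (sV) _; apply: V0V.
split.
  by move=> a [[_ [nV _]]|[_ [nV _]]] /V0V.
split.
  move=> x; split.
    move=> [[a [Da Vxa]] nV0x].
    have nVa : ~ V' a.
      move=> Va; apply: nV0x; rewrite -[x](subrK a).
      by apply: subspaceD (sV0) Vxa (rspan_gen _).
    exists a; split => //.
    have [pa|pa] := pos_total chB covB orB (DW _ Da) nVa.
      by right.
    by left.
  move=> [a [Ha Vxa]].
  have [Da nVa] : D a /\ ~ V' a by case: Ha => [[? [? _]]|[? [? _]]].
  split; first by exists a.
  move=> V0x; apply: nVa; apply: V0V.
  have -> : a = x - (x - a) by rewrite opprB addrCA subrr addr0.
  by apply: subspaceB (sV0) V0x Vxa.
move=> U sU V0U HU x Ux.
have [k1 [Hk1 V1]] := HU x Ux.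
have [k2 [Hk2 V2]] := HU (- x) (subspaceN sU Ux).
have [e1|p1] := cone_pos _ Hk1; first by move: V1; rewrite e1 subr0.
have [e2|p2] := cone_pos _ Hk2.
  exfalso; apply: (pnV _ p1); apply: V0V.
  move: V2; rewrite e2 subr0 => V2.
  have -> : k1 = - (- x) - (x - k1) by rewrite opprK opprB addrC subrK.
  by apply: subspaceB (sV0) _ V1; apply: subspaceN (sV0) V2.
exfalso; apply: (pnV _ (pA _ _ p1 p2)); apply: V0V.
have -> : k1 + k2 = - ((x - k1) + (- x - k2)).
  by rewrite addrACA addrN add0r opprD !opprK.
by apply: subspaceN (sV0) _; apply: subspaceD (sV0) V1 V2.
Qed.

End Part2.
Lemma zorn_good (T : Type) (good : set (set T)) (X0 : set T) : good X0 ->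
  (forall F : set (set T), F `<=` good -> F !=set0 -> total_on F subset ->
     good (\bigcup_(X in F) X)) ->
  exists M, good M /\ X0 `<=` M /\ forall N, good N -> M `<=` N -> N = M.
Proof.
move=> gX0 gU.
pose good' := fun X => good X /\ X0 `<=` X.
have cl : forall F : set (set T), F `<=` (fun A => good' A \/ A = set0) ->
    total_on F subset -> good' (\bigcup_(X in F) X) \/ \bigcup_(X in F) X = set0.
move=> F FP Ftot.
have [[X [FX gX]]|ng] := pselect (exists X, F X /\ good' X).
  left.
  have -> : \bigcup_(X in F) X = \bigcup_(X in F `&` good') X.
    apply/seteqP; split => x.
      move=> [Y FY Yx]; exists Y => //; split => //.
      by case: (FP Y FY) => // Y0; rewrite Y0 in Yx.
    by move=> [Y [FY _] Yx]; exists Y.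
  split.
    apply: gU; first by move=> Y [_ []].
      by exists X.
    by move=> Y Z [FY _] [FZ _]; apply: Ftot.
  by move=> x X0x; exists X; [split|apply: gX.2].
right; apply/seteqP; split => x // [Y FY Yx].
case: (FP Y FY) => [g'Y|Y0]; first by exfalso; apply: ng; exists Y.
by rewrite Y0 in Yx.
have [A [PA Amax]] := @Zorn_bigcup T (fun A => good' A \/ A = set0) cl.
  have g'A : good' A.
    case: PA => // A0; subst A.
    have [X0s|nX0s] := pselect (X0 `<=` set0).
      have -> : (set0 : set T) = X0 by apply/seteqP; split.
      by split.
    exfalso; apply: (Amax X0); last by left; split.
    by split => // x.
  exists A; split; first exact: g'A.1.
  split; first exact: g'A.2.
  move=> N gN AN; apply: contrapT => NA.
  apply: (Amax N); first by split => // NA'; apply: NA; apply/seteqP; split.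
  by left; split => //; apply: subset_trans AN; exact: g'A.2.
Qed.
Section MaxChain.
Context {R : realType} {E : lmodType R}.
Lemma exists_maxchain (V' W : set E) (B : set (set E)) : chain V' W B ->
  exists C, maximal_chain V' W C /\ B `<=` C.
Proof.
move=> chB.
have gU : forall F : set (set (set E)), F `<=` chain V' W -> F !=set0 ->
    total_on F subset -> chain V' W (\bigcup_(X in F) X).
  move=> F Fg _ Ftot; split.
    by move=> G [X FX XG]; apply: (Fg X FX).1.
  move=> G1 G2 [X1 F1 x1] [X2 F2 y2].
  have [S12|S21] := Ftot X1 X2 F1 F2.
    by apply: (Fg X2 F2).2 => //; apply: S12.
  by apply: (Fg X1 F1).2 => //; apply: S21.
have [C [chC [BC Cmax]]] := zorn_good chB gU.
by exists C; split => //; split.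
Qed.
End MaxChain.
Section Part1.
Context {R : realType} {E : lmodType R}.
Implicit Types (U A Bs H : set E) (x y z v w : E).
Variables (D Dm D0 Dp : set E).
Hypothesis par : parabolic D Dm D0 Dp.

Let W := rspan D.
Let V0 := rspan D0.
Let S := Dp `|` (fun a => - a) @` Dm.
Let K := [set x | exists k, rcone S k /\ V0 (x - k)].

Let hD : D = Dm `|` D0 `|` Dp. Proof. by case: par. Qed.
Let h0 : forall a, Dm a \/ Dp a -> ~ V0 a.
Proof. by case: par => _ [_ [_ [_ [_ [h _]]]]]. Qed.
Let htri : forall U, subspace U -> V0 `<=` U -> U `<=` K -> U `<=` V0.
Proof. by case: par => _ [_ [_ [_ [_ [_ [_ h]]]]]]. Qed.

Let sW : subspace W. Proof. exact: rspan_subspace. Qed.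
Let sV0 : subspace V0. Proof. exact: rspan_subspace. Qed.
Let DmD : Dm `<=` D. Proof. by rewrite hD => x Dx; left; left. Qed.
Let D0D : D0 `<=` D. Proof. by rewrite hD => x Dx; left; right. Qed.
Let DpD : Dp `<=` D. Proof. by rewrite hD => x Dx; right. Qed.
Let DW : D `<=` W. Proof. by move=> x; apply: rspan_gen. Qed.
Let V0W : V0 `<=` W.
Proof. by apply: rspan_min => // x /D0D /DW. Qed.
Let SW : S `<=` W.
Proof.
move=> x [/DpD /DW //|[a /DmD /DW Wa <-]]; exact: subspaceN.
Qed.

Let KW : K `<=` W.
Proof.
move=> x [k [Sk Vk]]; rewrite -[x](subrK k).
by apply: subspaceD (sW) (V0W Vk) (rcone_sub sW SW Sk).
Qed.
Let V0K : V0 `<=` K.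
Proof. by move=> x Vx; exists 0; split; [apply: rcone0 | rewrite subr0]. Qed.
Let KD x y : K x -> K y -> K (x + y).
Proof.
move=> [k1 [S1 V1]] [k2 [S2 V2]]; exists (k1 + k2); split; first exact: rconeD.
by rewrite opprD addrACA; apply: subspaceD (sV0) V1 V2.
Qed.
Let KZ a x : 0 <= a -> K x -> K (a *: x).
Proof.
move=> a0 [k [Sk Vk]]; exists (a *: k); split; first exact: rconeZ.
by rewrite -scalerBr; apply: subspaceZ (sV0) Vk.
Qed.
Let Kpt x : K x -> K (- x) -> V0 x.
Proof.
move=> Kx Kmx.
have sU : subspace [set y | K y /\ K (- y)].
  split; first by split; rewrite ?oppr0; apply: V0K; apply: subspace0.
  split.
    by move=> y z [Ky Kmy] [Kz Kmz]; split; [apply: KD | rewrite opprD; apply: KD].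
  move=> a y [Ky Kmy]; have [a0|a0] := leP 0 a.
    by split; [apply: KZ | rewrite -scalerN; apply: KZ].
  have a0' : 0 <= - a by rewrite oppr_ge0 ltW.
  split.
    by rewrite -[a]opprK scaleNr -scalerN; apply: KZ.
  by rewrite -scaleNr; apply: KZ.
apply: (htri sU) (conj Kx Kmx).
  by move=> y Vy; split; apply: V0K => //; apply: subspaceN.
by move=> y [].
Qed.

Section Order.
Variable P : set E.
Hypothesis PW : P `<=` W.
Hypothesis KP : K `<=` P.
Hypothesis PD : forall x y, P x -> P y -> P (x + y).
Hypothesis PZ : forall (a : R) x, 0 <= a -> P x -> P (a *: x).
Hypothesis Ppt : forall x, P x -> P (- x) -> V0 x.
Hypothesis Ptot : forall x, W x -> P x \/ P (- x).

Let V0P y : V0 y -> P y. Proof. by move=> /V0K /KP. Qed.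
Let P0 : P 0. Proof. exact: V0P (subspace0 sV0). Qed.

Definition Ga x := [set y | W y /\ forall e : R, 0 < e -> P (e *: x - y) /\ P (e *: x + y)].
Definition Gb x := [set y | W y /\ exists M : R, P (M *: x - y) /\ P (M *: x + y)].
Definition convex (G : set E) := forall y z, G y -> W z -> P (y - z) -> P (y + z) -> G z.

Lemma gen_subspace (G : set E) : G 0 -> (forall y z, G y -> G z -> G (y + z)) ->
  (forall y, G y -> G (- y)) -> (forall c y, 0 < c -> G y -> G (c *: y)) -> subspace G.
Proof.
move=> G0 GD GN GZ; split => //; split => // a y Gy.
have [a0|a0|a0] := ltgtP 0 a.
- exact: GZ.
- by rewrite -[a]opprK scaleNr -scalerN; apply: GZ; [rewrite oppr_gt0 | apply: GN].
- by rewrite -a0 scale0r.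
Qed.

Lemma Ga_subspace x : P x -> subspace (Ga x).
Proof.
move=> Px; apply: gen_subspace.
- split; first exact: subspace0.
  by move=> e e0; rewrite subr0 addr0; split; apply: PZ => //; apply: ltW.
- move=> y z [Wy Hy] [Wz Hz]; split; first exact: subspaceD.
  move=> e e0; have e2 : 0 < e / 2 by lra.
  have [Py1 Py2] := Hy _ e2; have [Pz1 Pz2] := Hz _ e2.
  rewrite (splitr e) scalerDl; split.
    by rewrite opprD addrACA; apply: PD.
  by rewrite addrACA; apply: PD.
- move=> y [Wy Hy]; split; first exact: subspaceN.
  by move=> e e0; rewrite opprK; have [? ?] := Hy _ e0; split.
- move=> c y c0 [Wy Hy]; split; first exact: subspaceZ.
  move=> e e0; have ec : 0 < e / c by apply: divr_gt0.
  have [P1 P2] := Hy _ ec.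
  have -> : e *: x = c *: ((e / c) *: x) by rewrite scalerA mulrCA mulfV ?gt_eqF // mulr1.
  by rewrite -scalerBr -scalerDr; split; apply: PZ => //; apply: ltW.
Qed.

Lemma Gb_subspace x : P x -> subspace (Gb x).
Proof.
move=> Px; apply: gen_subspace.
- split; first exact: subspace0.
  by exists 0; rewrite scale0r subr0 addr0.
- move=> y z [Wy [M1 [P1 P2]]] [Wz [M2 [Q1 Q2]]]; split; first exact: subspaceD.
  exists (M1 + M2); rewrite scalerDl; split.
    by rewrite opprD addrACA; apply: PD.
  by rewrite addrACA; apply: PD.
- move=> y [Wy [M [P1 P2]]]; split; first exact: subspaceN.
  by exists M; rewrite opprK.
- move=> c y c0 [Wy [M [P1 P2]]]; split; first exact: subspaceZ.
  exists (c * M); rewrite -scalerA -scalerBr -scalerDr.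
  by split; apply: PZ => //; apply: ltW.
Qed.

Lemma Ga_convex x : convex (Ga x).
Proof.
move=> y z [Wy Hy] Wz P1 P2; split => // e e0.
have [Q1 Q2] := Hy _ e0.
split.
  have -> : e *: x - z = (e *: x - y) + (y - z) by rewrite addrA subrK.
  exact: PD.
have -> : e *: x + z = (e *: x - y) + (y + z) by rewrite addrA subrK.
  exact: PD.
Qed.

Lemma Gb_convex x : convex (Gb x).
Proof.
move=> y z [Wy [M [Q1 Q2]]] Wz P1 P2; split => //; exists M.
split.
  have -> : M *: x - z = (M *: x - y) + (y - z) by rewrite addrA subrK.
  exact: PD.
have -> : M *: x + z = (M *: x - y) + (y + z) by rewrite addrA subrK.
  exact: PD.
Qed.

Lemma V0Ga x : P x -> V0 `<=` Ga x.
Proof.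
move=> Px y Vy; split; first exact: V0W.
move=> e e0; split; apply: PD; try (apply: PZ => //; exact: ltW).
  by apply: V0P; apply: subspaceN.
exact: V0P.
Qed.

Lemma GaGb x : Ga x `<=` Gb x.
Proof. by move=> y [Wy Hy]; split => //; exists 1; apply: Hy. Qed.

Lemma Gb_self x : W x -> P x -> Gb x x.
Proof.
move=> Wx Px; split => //; exists 1; rewrite scale1r subrr; split => //.
exact: PD.
Qed.

Lemma Ga_self x : P x -> ~ V0 x -> ~ Ga x x.
Proof.
move=> Px nV [Wx Hx]; have h2 : 0 < (2^-1 : R) by rewrite invr_gt0 ltr0n.
have [P1 _] := Hx _ h2.
have c0 : 0 < 1 - (2^-1 : R) by lra.
have P2 : P (- ((1 - 2^-1) *: x)) by rewrite scalerBl scale1r opprB.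
apply: nV; apply: (subspace_unscale (c := 1 - 2^-1)) => //.
  by rewrite gt_eqF.
by apply: Ppt P2; apply: PZ => //; apply: ltW.
Qed.

Lemma Ga_codim x : W x -> P x -> ~ V0 x -> codim1 (Ga x) (Gb x).
Proof.
move=> Wx Px nV; split; first exact: GaGb.
exists x; split; first exact: Gb_self.
split; first exact: Ga_self.
move=> y [Wy [M [P1 P2]]].
pose Ss := [set s : R | P (y - s *: x)].
have SM : Ss (- M) by rewrite /Ss /= scaleNr opprK addrC.
have Sub : forall s, Ss s -> s <= M.
  move=> s Ps; rewrite leNgt; apply/negP => Ms.
  have Q : P ((M - s) *: x) by rewrite -(idt4 _ _ _ y); apply: PD.
  have Q' : P (- ((M - s) *: x)) by rewrite -scaleNr opprB; apply: PZ => //; rewrite subr_ge0 ltW.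
  apply: nV; apply: (subspace_unscale (c := M - s)) => //.
    by rewrite subr_eq0 lt_eqF.
  exact: Ppt.
have hs : has_sup Ss by split; [exists (- M) | exists M => s /Sub].
set t := sup Ss.
exists t; split; first by apply: subspaceB => //; apply: subspaceZ.
move=> e e0; split.
  have nS : ~ Ss (t + e).
    by move=> /(sup_upper_bound hs); rewrite -/t; lra.
  have Wt : W (y - (t + e) *: x) by apply: subspaceB => //; apply: subspaceZ.
  by case: (Ptot Wt) => // Pn; rewrite idt1.
have [s Ss_s ts] := sup_adherent e0 hs.
rewrite -/t in ts.
rewrite (idt2 _ _ _ _ s); apply: PD => //; apply: PZ => //; lra.
Qed.

Lemma pos_witness (G G' : set E) y : subspace G -> G `<=` W -> subspace G' ->
  G y -> ~ G' y -> exists a, P a /\ G a /\ ~ G' a.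
Proof.
move=> sG GW sG' Gy nG'y.
case: (Ptot (GW _ Gy)) => Py; first by exists y.
exists (- y); split => //; split; first exact: subspaceN.
by move=> /(subspaceN sG'); rewrite opprK.
Qed.

Lemma conv_total (G1 G2 : set E) : subspace G1 -> subspace G2 -> G1 `<=` W -> G2 `<=` W ->
  convex G1 -> convex G2 -> G1 `<=` G2 \/ G2 `<=` G1.
Proof.
move=> s1 s2 W1 W2 c1 c2.
have [//|n12] := pselect (G1 `<=` G2); first by left.
have [//|n21] := pselect (G2 `<=` G1); first by right.
exfalso.
have [y1 [G1y1 nG2y1]] := nonsubset n12.
have [y2 [G2y2 nG1y2]] := nonsubset n21.
have [a1 [Pa1 [G1a1 nG2a1]]] := pos_witness s1 W1 s2 G1y1 nG2y1.
have [a2 [Pa2 [G2a2 nG1a2]]] := pos_witness s2 W2 s1 G2y2 nG1y2.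
have Wd : W (a2 - a1) by apply: subspaceB => //; [apply: W2 | apply: W1].
case: (Ptot Wd) => Pd.
  by apply: nG2a1; apply: (c2 a2) => //; [apply: W1 | apply: PD].
apply: nG1a2; apply: (c1 a1) => //; first exact: W2.
  by rewrite -opprB.
exact: PD.
Qed.

Definition Bset := [set G | exists x, W x /\ P x /\ ~ V0 x /\ (G = Ga x \/ G = Gb x)].

Lemma Bset_props G : Bset G -> [/\ subspace G, V0 `<=` G, G `<=` W & convex G].
Proof.
move=> [x [Wx [Px [nV [->|->]]]]].
  split; [exact: Ga_subspace | exact: V0Ga | by move=> y [] | exact: Ga_convex].
split; [exact: Gb_subspace | | by move=> y [] | exact: Gb_convex].
by move=> y /(V0Ga Px) /GaGb.
Qed.

Lemma Bset_chain : chain V0 W Bset.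
Proof.
split.
  by move=> G /Bset_props [sG VG GW _]; split.
move=> G1 G2 /Bset_props [s1 _ W1 c1] /Bset_props [s2 _ W2 c2].
exact: conv_total.
Qed.

Lemma absP y : W y -> ~ V0 y -> exists x, W x /\ P x /\ ~ V0 x /\ (y = x \/ y = - x).
Proof.
move=> Wy nV; case: (Ptot Wy) => Py.
  by exists y; do 3 (split => //); left.
exists (- y); split; first exact: subspaceN.
split => //; split; last by right; rewrite opprK.
by move=> /(subspaceN sV0); rewrite opprK.
Qed.

Lemma Bset_pair x : W x -> P x -> ~ V0 x ->
  [/\ Bset (Ga x), Bset (Gb x), Ga x `<` Gb x & codim1 (Ga x) (Gb x)].
Proof.
move=> Wx Px nV; split.
- by exists x; do 3 (split => //); left.
- by exists x; do 3 (split => //); right.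
- split; first exact: GaGb.
  by move=> /(_ x (Gb_self Wx Px)); apply: Ga_self.
- exact: Ga_codim.
Qed.

Lemma Bset_covers : covers V0 W Bset.
Proof.
move=> y Wy nV; have [x [Wx [Px [nVx exy]]]] := absP Wy nV.
have [B1 B2 pr c1] := Bset_pair Wx Px nVx.
exists (Ga x), (Gb x); do 4 (split => //).
have sa := Ga_subspace Px; have sb := Gb_subspace Px.
have Gbx := Gb_self Wx Px; have Gax := Ga_self Px nVx.
case: exy => ->; first by split.
split; first exact: subspaceN.
by move=> /(subspaceN sa); rewrite opprK.
Qed.

Let Bsub G : Bset G -> subspace G. Proof. by case/Bset_props. Qed.
Let Btot := Bset_chain.2.

Lemma Bset_basic : basic_chain V0 W Bset.
Proof.
split; first exact: Bset_chain.
split; first exact: Bset_covers.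
move=> B' chB' [B'B nBB'] covB'.
have [G [BG nB'G]] := nonsubset nBB'.
move: (BG) => [x [Wx [Px [nVx eG]]]].
have [B1 B2 pr c1] := Bset_pair Wx Px nVx.
have [A' [Bb' [BA' [BBb' [pr' [c' [Bx nAx]]]]]]] := covB' x Wx nVx.
have [e1 e2] := pair_unique Bsub Btot (B'B _ BA') (B'B _ BBb') B1 B2 c' c1 Bx nAx
  (Gb_self Wx Px) (Ga_self Px nVx).
by apply: nB'G; case: eG => ->; [rewrite -e1 | rewrite -e2].
Qed.

Definition orient (A Bs : set E) : E := xget 0 [set v | P v /\ Bs v /\ ~ A v].

Lemma orient_spec A Bs : Bset A -> Bset Bs -> codim1 A Bs ->
  P (orient A Bs) /\ Bs (orient A Bs) /\ ~ A (orient A Bs).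
Proof.
move=> BA BB [AB [v [Bv [Av _]]]].
apply: (@xgetPex _ 0 [set v | P v /\ Bs v /\ ~ A v]).
have [_ _ BW _] := Bset_props BB.
case: (Ptot (BW _ Bv)) => Pv; first by exists v.
exists (- v); split => //; split; first exact: (subspaceN (Bsub BB)).
by move=> /(subspaceN (Bsub BA)); rewrite opprK.
Qed.

Lemma Bset_orient : orientation Bset orient.
Proof. by move=> A Bs BA BB _ c; have [_ ?] := orient_spec BA BB c. Qed.

Lemma posI y : W y -> P y -> ~ V0 y -> chain_pos Bset orient y.
Proof.
move=> Wy Py nV.
have [B1 B2 pr c1] := Bset_pair Wy Py nV.
have [Pv [Bv nAv]] := orient_spec B1 B2 c1.
have [t Ht] := codim1_any (Ga_subspace Py) c1 Bv nAv (Gb_self Wy Py).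
exists (Ga y), (Gb y); do 4 (split => //).
have Gby := Gb_self Wy Py; have nGay := Ga_self Py nV.
split => //; split => //; split => //; split => //.
exists t; split => //.
have [t0|t0|t0] := ltgtP 0 t => //.
  exfalso; move: Ht => [_ /(_ 1 ltr01) [Q _]].
  move: Q; rewrite scale1r opprB addrC subrK => Q.
  apply: nAv; apply: (V0Ga Py); apply: (subspace_unscale (c := t)) => //.
    by rewrite lt_eqF.
  apply: Ppt => //; rewrite -scaleNr; apply: PZ => //.
  by rewrite oppr_ge0 ltW.
by exfalso; apply: nGay; move: Ht; rewrite -t0 scale0r subr0.
Qed.

Lemma pos_to_P y : W y -> chain_pos Bset orient y -> P y.
Proof.
move=> Wy [A [Bs [BA [BB [pr [c1 [By [nAy [_ [_ [t [t0 Ht]]]]]]]]]]]].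
have [Pv [Bv nAv]] := orient_spec BA BB c1.
apply: contrapT => nPy.
have Pmy : P (- y) by case: (Ptot Wy).
have [_ VA _ _] := Bset_props BA.
have nVy : ~ V0 (- y) by move=> /(subspaceN sV0); rewrite opprK => /VA.
have Wmy : W (- y) by apply: subspaceN.
have [B1 B2 pr' c'] := Bset_pair Wmy Pmy nVy.
have sa := Ga_subspace Pmy; have sb := Gb_subspace Pmy.
have Gby : Gb (- y) y by have := subspaceN sb (Gb_self Wmy Pmy); rewrite opprK.
have nGay : ~ Ga (- y) y by move=> /(subspaceN sa); apply: Ga_self.
have [e1 e2] := pair_unique Bsub Btot BA BB B1 B2 c1 c' By nAy Gby nGay.
rewrite e1 in Ht nAv Pv.
move: Ht => [_ /(_ 1 ltr01) [_ Q]].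
move: Q; rewrite scale1r addrA addNr add0r => Q.
apply: nAv; apply: (V0Ga Pmy); apply: (subspace_unscale (c := t)) => //.
  by rewrite gt_eqF.
exact: Ppt (PZ (ltW t0) Pv) Q.
Qed.

Lemma part1_P (C : set (set E)) : maximal_chain V0 W C -> Bset `<=` C ->
  oriented_chain V0 W C Bset orient /\ assoc_dec V0 D Bset orient = (Dm, D0, Dp).
Proof.
have _ := (PW, KP, PD, PZ, Ppt, Ptot).
move=> mC BC; split.
  split => //; split => //; split; [exact: Bset_basic | exact: Bset_orient].
have DpP : Dp `<=` P.
  move=> a Da; apply: KP; exists a; split; first by apply: rcone_gen; left.
  by rewrite subrr; apply: subspace0.
have DmP : forall a, Dm a -> P (- a).
  move=> a Da; apply: KP; exists (- a); split; first by apply: rcone_gen; right; exists a.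
  by rewrite subrr; apply: subspace0.
have D0V : D0 `<=` V0 by move=> a; apply: rspan_gen.
have e1 : [set a | D a /\ ~ V0 a /\ chain_pos Bset orient (- a)] = Dm.
  apply/seteqP; split => a.
    move=> [Da [nV pa]].
    have Pma : P (- a) by apply: pos_to_P pa; apply: subspaceN => //; apply: DW.
    move: Da; rewrite {1}hD => -[[//|/D0V //]|/DpP Pa].
    by exfalso; apply: nV; apply: Ppt.
  move=> Da; split; first exact: DmD.
  have nV : ~ V0 a by apply: h0; left.
  split => //; apply: posI; first by apply: subspaceN => //; apply: DW; apply: DmD.
    exact: DmP.
  by move=> /(subspaceN sV0); rewrite opprK.
have e3 : [set a | D a /\ ~ V0 a /\ chain_pos Bset orient a] = Dp.
  apply/seteqP; split => a.
    move=> [Da [nV pa]].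
    have Pa : P a by apply: pos_to_P pa; apply: DW.
    move: Da; rewrite {1}hD => -[[/DmP Pma|/D0V //]|//].
    by exfalso; apply: nV; apply: Ppt.
  move=> Da; split; first exact: DpD.
  have nV : ~ V0 a by apply: h0; right.
  split => //; apply: posI => //; first by apply: DW; apply: DpD.
  exact: DpP.
have e2 : D `&` V0 = D0.
  apply/seteqP; split => a.
    move=> [Da Va]; move: Da; rewrite {1}hD => -[[Dma|//]|Dpa].
      by exfalso; apply: (h0 (or_introl Dma)).
    by exfalso; apply: (h0 (or_intror Dpa)).
  by move=> Da; split; [apply: D0D | apply: D0V].
by rewrite /assoc_dec e1 e2 e3.
Qed.
End Order.

Lemma exists_P : exists P : set E, P `<=` W /\ K `<=` P /\
  (forall x y, P x -> P y -> P (x + y)) /\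
  (forall (a : R) x, 0 <= a -> P x -> P (a *: x)) /\
  (forall x, P x -> P (- x) -> V0 x) /\ (forall x, W x -> P x \/ P (- x)).
Proof.
pose good := fun Q : set E => [/\ Q `<=` W, (forall x y, Q x -> Q y -> Q (x + y)),
  (forall (a : R) x, 0 <= a -> Q x -> Q (a *: x)) & (forall x, Q x -> Q (- x) -> V0 x)].
have gK : good K by split.
have gU : forall F : set (set E), F `<=` good -> F !=set0 -> total_on F subset ->
    good (\bigcup_(X in F) X).
  move=> F Fg _ Ftot; split.
  - by move=> x [X FX Xx]; have [XW _ _ _] := Fg X FX; apply: XW.
  - move=> x y [X1 F1 x1] [X2 F2 y2].
    have [S12|S21] := Ftot X1 X2 F1 F2.
      by exists X2 => //; have [_ XD _ _] := Fg X2 F2; apply: XD => //; apply: S12.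
    by exists X1 => //; have [_ XD _ _] := Fg X1 F1; apply: XD => //; apply: S21.
  - move=> a x a0 [X FX Xx]; exists X => //.
    by have [_ _ XZ _] := Fg X FX; apply: XZ.
  - move=> x [X1 F1 x1] [X2 F2 y2].
    have [S12|S21] := Ftot X1 X2 F1 F2.
      by have [_ _ _ Xp] := Fg X2 F2; apply: Xp => //; apply: S12.
    by have [_ _ _ Xp] := Fg X1 F1; apply: Xp => //; apply: S21.
have [M [[MW MD MZ Mpt] [KM Mmax]]] := zorn_good gK gU.
exists M; do 5 (split => //).
move=> x Wx; apply: contrapT => /not_orP [nMx nMmx].
have M0 : M 0 by apply: KM; apply: V0K; apply: subspace0.
pose Q := [set z | exists p (s : R), M p /\ 0 <= s /\ z = p + s *: x].
have gQ : good Q.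
  split.
  - move=> z [p [s [Mp [s0 ->]]]]; apply: subspaceD => //; first exact: MW.
    exact: subspaceZ.
  - move=> z1 z2 [p1 [s1 [M1 [s10 ->]]]] [p2 [s2 [M2 [s20 ->]]]].
    exists (p1 + p2), (s1 + s2); split; first exact: MD.
    split; first exact: addr_ge0.
    by rewrite scalerDl addrACA.
  - move=> a z a0 [p [s [Mp [s0 ->]]]]; exists (a *: p), (a * s); split; first exact: MZ.
    split; first exact: mulr_ge0.
    by rewrite scalerDr scalerA.
  - move=> z [p [s [Mp [s0 ez]]]] [p' [s' [Mp' [s0' ez']]]].
    have h : (s + s') *: x + (p + p') = 0.
      by rewrite scalerDl addrC addrACA -ez -ez' subrr.
    have [ss|ss] := ltP 0 (s + s').
      exfalso; apply: nMmx.
      have -> : - x = (s + s')^-1 *: (p + p').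
        move/eqP: h; rewrite addr_eq0 => /eqP h.
        by rewrite -[p + p']opprK -h scalerN scalerA mulVf ?gt_eqF // scale1r.
      by apply: MZ; [rewrite invr_ge0 ltW | apply: MD].
    have s00 : s = 0 by lra.
    have s00' : s' = 0 by lra.
    move: ez ez'; rewrite s00 s00' scale0r !addr0 => ez ez'; subst z.
    by apply: Mpt => //; rewrite ez'.
have MQ : M `<=` Q by move=> p Mp; exists p, 0; rewrite scale0r addr0.
have eQ := Mmax Q gQ MQ.
apply: nMx; rewrite -eQ; exists 0, 1; split => //; split; first exact: ler01.
by rewrite add0r scale1r.
Qed.

Lemma part1 : exists (C B : set (set E)) (o : set E -> set E -> E),
  oriented_chain V0 W C B o /\ assoc_dec V0 D B o = (Dm, D0, Dp).
Proof.
have [P [PW [KP [PD [PZ [Ppt Ptot]]]]]] := exists_P.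
have chB := Bset_chain KP PD PZ Ptot.
have [C [mC BC]] := exists_maxchain chB.
exists C, (Bset P), (orient P).
exact: part1_P PW KP PD PZ Ppt Ptot C mC BC.
Qed.
End Part1.

Unset Implicit Arguments.

Theorem theorem10 (R : realType) (E : lmodType R) (D : set E) :
  (forall Dm D0 Dp : set E, parabolic D Dm D0 Dp ->
     exists (C B : set (set E)) (o : set E -> set E -> E),
       oriented_chain (rspan D0) (rspan D) C B o /\
       assoc_dec (rspan D0) D B o = (Dm, D0, Dp)) /\
  (forall (V' : set E) (C B : set (set E)) (o : set E -> set E -> E),
     subspace V' -> V' `<=` rspan D ->
     oriented_chain V' (rspan D) C B o ->
     parabolic D (assoc_dec V' D B o).1.1 (assoc_dec V' D B o).1.2
                 (assoc_dec V' D B o).2 /\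
     (assoc_dec V' D B o).1.2 = D `&` V').
Proof.
split.
  move=> Dm D0 Dp par; exact: (@part1 R E D Dm D0 Dp par).
move=> V' C B o sV VW oc; exact: (part2 sV VW oc).
Qed.
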